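(* For every positive integer $n$, every nonzero real root of $D(F_n,x)=(2x+x^2)^n+x(1+x)^{2n}$ lies in the open interval $(-2,0)$. Moreover, for every even positive integer $n$, $D(F_n,x)$ has at least two real roots in $(-2,0)$, neither of which equals $-1$ (more precisely, at least one in $(-2,-1)$ and at least one in $(-1,0)$). *)

(* Defs.v *)
From Stdlib Require Import Reals.
Open Scope R_scope.

Definition DF (n : nat) (x : R) : R :=
  (2 * x + x ^ 2) ^ n + x * (1 + x) ^ (2 * n).

(* Main.v *)
Require Import Defs.
From Stdlib Require Import Reals Lra Lia.
Open Scope R_scope.

Lemma powlt (a b : R) (n : nat) : 0 <= a < b -> (0 < n)%nat -> a ^ n < b ^ n.
Proof.
  intros [Ha Hab] Hn. induction n as [|n IH]; [lia|].
  destruct n as [|n]; [simpl; lra|].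
  assert (IH' : a ^ S n < b ^ S n) by (apply IH; lia).
  change (a * a ^ S n < b * b ^ S n).
  assert (0 <= a ^ S n) by (apply pow_le; lra).
  nra.
Qed.

Lemma DF_alt n x : DF n x = (2*x+x^2)^n + x * ((1+x)^2)^n.
Proof. unfold DF. rewrite pow_mult. reflexivity. Qed.

Lemma DF_cont n : continuity (DF n).
Proof. apply derivable_continuous. unfold DF. reg. Qed.

Lemma key m : (1 <= m)%nat -> 8 * 225 ^ m < 2401 ^ m.
Proof.
  intro H. induction m as [|m IH]; [lia|].
  destruct m as [|m]; [simpl; lra|].
  assert (IH' : 8 * 225 ^ S m < 2401 ^ S m) by (apply IH; lia).
  change (8 * (225 * 225 ^ S m) < 2401 * 2401 ^ S m).
  assert (0 <= 225 ^ S m) by (apply pow_le; lra).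
  nra.
Qed.

Theorem mainTheorem3 :
  (forall (n : nat) (x : R), (0 < n)%nat -> x <> 0 -> DF n x = 0 ->
     -2 < x < 0) /\
  (forall n : nat, (0 < n)%nat -> Nat.Even n ->
     (exists x : R, -2 < x < -1 /\ DF n x = 0) /\
     (exists y : R, -1 < y < 0 /\ DF n y = 0)).
Proof.
  split.
  - intros n x Hn Hx H. rewrite DF_alt in H.
    destruct (Rle_or_lt x (-2)) as [H2|H2].
    + assert (Hl : (2*x+x^2)^n < ((1+x)^2)^n) by (apply powlt; [nra|lia]).
      assert (0 <= (2*x+x^2)^n) by (apply pow_le; nra).
      assert (0 < ((1+x)^2)^n) by (apply pow_lt; nra).
      nra.
    + destruct (Rlt_or_le x 0) as [H3|H3]; [lra|].
      assert (0 < (2*x+x^2)^n) by (apply pow_lt; nra).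
      assert (0 < ((1+x)^2)^n) by (apply pow_lt; nra).
      nra.
  - intros n Hn [m ->].
    assert (Hm1 : DF (2*m) (-1) = 1).
    { unfold DF. replace (2 * -1 + (-1)^2) with (-1) by ring.
      replace (1 + -1) with 0 by ring. rewrite pow_1_even, pow_i by lia. ring. }
    assert (Hm2 : DF (2*m) (-2) = -2).
    { unfold DF. replace (2 * -2 + (-2)^2) with 0 by ring.
      replace (1 + -2) with (-1) by ring. rewrite pow_1_even, pow_i by lia. ring. }
    assert (Hm3 : DF (2*m) (-1/8) < 0).
    { unfold DF. rewrite (pow_mult _ 2 m).
      replace (2 * (2 * m))%nat with (2 * 2 * m)%nat by lia.
      rewrite (pow_mult _ (2*2) m).
      replace ((2 * (-1/8) + (-1/8)^2)^2) with (225/4096) by field.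
      replace ((1 + -1/8)^(2*2)) with (2401/4096) by (simpl; field).
      assert (K := key m ltac:(lia)).
      rewrite !Rdiv_def, !Rpow_mult_distr.
      assert (0 < (/4096)^m) by (apply pow_lt; lra).
      nra. }
    split.
    + destruct (IVT (DF (2*m)) (-2) (-1) (DF_cont _) ltac:(lra) ltac:(lra) ltac:(lra)) as [z [Hz Hz0]].
      exists z. split; [|exact Hz0].
      split; (destruct Hz as [A B]; apply Rle_lt_or_eq in A; apply Rle_lt_or_eq in B);
        destruct A as [A|A]; destruct B as [B|B]; subst; try lra.
    + destruct (IVT (fun t => - DF (2*m) t) (-1) (-1/8)) as [z [Hz Hz0]];
        [apply continuity_opp, DF_cont | lra | lra | lra |].
      exists z. split; [|lra].
      split; (destruct Hz as [A B]; apply Rle_lt_or_eq in A; apply Rle_lt_or_eq in B);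
        destruct A as [A|A]; destruct B as [B|B]; subst; try lra.
Qed.
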